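(* Let $\mathcal C$ be a Markov category with conditionals and precise supports, and $o:I\to X$ a deterministic state. Then in $\mathrm{Cond}(\mathcal C)$ the conditioning effect $(:=o)=(X,\mathrm{id}_X,o):X\leadsto I$ satisfies $(:=o)\bullet\big((:=o)\otimes \mathrm{Id}_X\big)\bullet J(\mathrm{copy}_X)=(:=o)$; i.e. $(x:=o);(x:=o)\approx(x:=o)$, so the effect $(:=o)$ is copyable.
   Context: A Markov category is a symmetric monoidal category $(\mathcal C,\otimes,I)$ (assumed strict) in which every object $X$ carries a commutative comonoid $\mathrm{copy}_X$, $\mathrm{del}_X$ compatible with $\otimes$, and $I$ is terminal. A morphism $f$ is deterministic if $\mathrm{copy}_Y f=(f\otimes f)\mathrm{copy}_X$. $\langle f,g\rangle=(f\otimes g)\mathrm{copy}_A$; marginals $f_X=(\mathrm{id}_X\otimes\mathrm{del}_Y)f$, $f_Y=(\mathrm{del}_X\otimes\mathrm{id}_Y)f$. A conditional of $f:A\to X\otimes Y$ w.r.t. $X$ is $f|_X:X\otimes A\to Y$ with $f=(\mathrm{id}_X\otimes f|_X)(\mathrm{copy}_X\otimes\mathrm{id}_A)(f_X\otimes\mathrm{id}_A)\mathrm{copy}_A$ (symmetrically w.r.t. $Y$); $\mathcal C$ has conditionals if these always exist. $f=_\mu g$ means $\langle\mathrm{id},f\rangle\mu=\langle\mathrm{id},g\rangle\mu$; $\mu\ll\nu$ means $f=_\nu g\Rightarrow f=_\mu g$ for all $f,g$. Precise supports: for deterministic $x:I\to X$, $y:I\to Y$, any $f:X\to Y$, $\mu:I\to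 X$: $x\otimes y\ll\langle\mathrm{id}_X,f\rangle\mu$ iff ($x\ll\mu$ and $y\ll fx$). $\mathrm{Obs}(\mathcal C)$: same objects as $\mathcal C$; morphisms $X\leadsto Y$ are triples $(K,f,o)$, $f:X\to Y\otimes K$, $o:I\to K$ deterministic; identity $\mathrm{Id}_X=(I,\mathrm{id}_X,\mathrm{id}_I)$; composition $(K',f',o')\bullet(K,f,o)=(K'\otimes K,(f'\otimes\mathrm{id}_K)f,o'\otimes o)$; tensor of $(K,f,o):X\leadsto Y$, $(K',f',o'):X'\leadsto Y'$ is $(K'\otimes K,(\mathrm{id}_{Y'}\otimes\mathrm{swap}_{K',Y}\otimes\mathrm{id}_K)(f'\otimes f),o'\otimes o)$; $J(f)=(I,f,\mathrm{id}_I)$. For states $(K,\psi,o),(K',\psi',o'):I\leadsto X$, $(K,\psi,o)\sim(K',\psi',o')$ iff either ($o\ll\psi_K$, $o'\ll\psi'_{K'}$ and $\psi|_Ko=\psi'|_{K'}o'$, $\psi|_K:K\to X$ a conditional w.r.t. $K$) or ($o\not\ll\psi_K$ and $o'\not\ll\psi'_{K'}$). For $F,G:X\leadsto Y$, $F\approx G$ iff for every $A$ and every state $\Psi:I\leadsto A\otimes X$, $(\mathrm{Id}_A\otimes F)\bullet\Psi\sim(\mathrm{Id}_A\otimes G)\bullet\Psi$. $\mathrm{Cond}(\mathcal C)=\mathrm{Obs}(\mathcal C)/{\approx}$. *)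

(* Defs.v *)
Set Implicit Arguments.
Unset Strict Implicit.

(* Strictness: the associativity and unit laws hold as equalities of  *)
(* objects; morphisms are transported along them by [eqm].            *)
Record MkData := {
  Ob : Type;
  Hom : Ob -> Ob -> Type;
  idm : forall X, Hom X X;
  comp : forall X Y Z, Hom Y Z -> Hom X Y -> Hom X Z;
  tens : Ob -> Ob -> Ob;
  unitO : Ob;
  tensm : forall X Y X' Y', Hom X X' -> Hom Y Y' -> Hom (tens X Y) (tens X' Y');
  swap : forall X Y, Hom (tens X Y) (tens Y X);
  copy : forall X, Hom X (tens X X);
  del : forall X, Hom X unitO;
  ob_assoc : forall X Y Z, tens (tens X Y) Z = tens X (tens Y Z);
  ob_lunit : forall X, tens unitO X = X;
  ob_runit : forall X, tens X unitO = X
}.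

Arguments Hom {m} _ _.
Arguments idm {m} X.
Arguments comp {m X Y Z} _ _.
Arguments tens {m} _ _.
Arguments unitO {m}.
Arguments tensm {m X Y X' Y'} _ _.
Arguments swap {m} X Y.
Arguments copy {m} X.
Arguments del {m} X.
Arguments ob_assoc {m} X Y Z.
Arguments ob_lunit {m} X.
Arguments ob_runit {m} X.

Declare Scope mk_scope.
Delimit Scope mk_scope with mk.
Open Scope mk_scope.
Notation "g ∘ f" := (comp g f) (at level 40, left associativity) : mk_scope.
Notation "X ⊗ Y" := (tens X Y) (at level 35, right associativity) : mk_scope.
Notation "f ⊗m g" := (tensm f g) (at level 35, right associativity) : mk_scope.
Notation I := unitO.

Section Generic.
Context {D : MkData}.

Definition eqm {X Y : Ob D} (e : X = Y) : Hom X Y :=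
  match e in _ = Y' return Hom X Y' with eq_refl => idm X end.

(* middle swap (A⊗B)⊗(C⊗E) -> (A⊗C)⊗(B⊗E), i.e. id_A ⊗ swap_{B,C} ⊗ id_E *)
Definition msw (A B C E : Ob D) : Hom ((A ⊗ B) ⊗ (C ⊗ E)) ((A ⊗ C) ⊗ (B ⊗ E)) :=
  eqm (eq_sym (ob_assoc A C (B ⊗ E)))
  ∘ (idm A ⊗m (eqm (ob_assoc C B E) ∘ (swap B C ⊗m idm E)
                 ∘ eqm (eq_sym (ob_assoc B C E))))
  ∘ eqm (ob_assoc A B (C ⊗ E)).

End Generic.

Record MarkovAxioms (D : MkData) : Prop := {
  comp_assoc : forall (W X Y Z : Ob D) (h : Hom Y Z) (g : Hom X Y) (f : Hom W X),
      h ∘ (g ∘ f) = (h ∘ g) ∘ f;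
  comp_id_l : forall (X Y : Ob D) (f : Hom X Y), idm Y ∘ f = f;
  comp_id_r : forall (X Y : Ob D) (f : Hom X Y), f ∘ idm X = f;
  tens_id : forall X Y : Ob D, idm X ⊗m idm Y = idm (X ⊗ Y);
  tens_comp : forall (X Y Z X' Y' Z' : Ob D) (f : Hom X Y) (g : Hom Y Z)
      (f' : Hom X' Y') (g' : Hom Y' Z'),
      (g ∘ f) ⊗m (g' ∘ f') = (g ⊗m g') ∘ (f ⊗m f');
  tens_assoc : forall (X Y Z X' Y' Z' : Ob D) (f : Hom X X') (g : Hom Y Y') (h : Hom Z Z'),
      eqm (ob_assoc X' Y' Z') ∘ ((f ⊗m g) ⊗m h) = (f ⊗m (g ⊗m h)) ∘ eqm (ob_assoc X Y Z);
  tens_lunit : forall (X Y : Ob D) (f : Hom X Y),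
      eqm (ob_lunit Y) ∘ (idm I ⊗m f) = f ∘ eqm (ob_lunit X);
  tens_runit : forall (X Y : Ob D) (f : Hom X Y),
      eqm (ob_runit Y) ∘ (f ⊗m idm I) = f ∘ eqm (ob_runit X);
  swap_nat : forall (X Y X' Y' : Ob D) (f : Hom X X') (g : Hom Y Y'),
      swap X' Y' ∘ (f ⊗m g) = (g ⊗m f) ∘ swap X Y;
  swap_inv : forall X Y : Ob D, swap Y X ∘ swap X Y = idm (X ⊗ Y);
  swap_hex : forall X Y Z : Ob D,
      swap (X ⊗ Y) Z =
      eqm (ob_assoc Z X Y) ∘ (swap X Z ⊗m idm Y) ∘ eqm (eq_sym (ob_assoc X Z Y))
      ∘ (idm X ⊗m swap Y Z) ∘ eqm (ob_assoc X Y Z);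
  swap_unit : forall X : Ob D,
      swap X I = eqm (eq_trans (ob_runit X) (eq_sym (ob_lunit X)));
  copy_counit_l : forall X : Ob D,
      eqm (ob_lunit X) ∘ (del X ⊗m idm X) ∘ copy X = idm X;
  copy_counit_r : forall X : Ob D,
      eqm (ob_runit X) ∘ (idm X ⊗m del X) ∘ copy X = idm X;
  copy_coassoc : forall X : Ob D,
      eqm (ob_assoc X X X) ∘ (copy X ⊗m idm X) ∘ copy X = (idm X ⊗m copy X) ∘ copy X;
  copy_comm : forall X : Ob D, swap X X ∘ copy X = copy X;
  copy_tens : forall X Y : Ob D, copy (X ⊗ Y) = msw X X Y Y ∘ (copy X ⊗m copy Y);
  del_tens : forall X Y : Ob D, del (X ⊗ Y) = eqm (ob_lunit I) ∘ (del X ⊗m del Y);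
  copy_unit : copy (@unitO D) = eqm (eq_sym (ob_lunit I));
  del_unit : del (@unitO D) = idm I;
  unit_terminal : forall (X : Ob D) (f g : Hom X I), f = g
}.

Record MarkovCat := { mdata :> MkData; maxioms : MarkovAxioms mdata }.

Section Markov.
Context {D : MkData}.

Definition deterministic {X Y : Ob D} (f : Hom X Y) : Prop :=
  copy Y ∘ f = (f ⊗m f) ∘ copy X.

Definition pairm {A X Y : Ob D} (f : Hom A X) (g : Hom A Y) : Hom A (X ⊗ Y) :=
  (f ⊗m g) ∘ copy A.

Definition margL {A X Y : Ob D} (f : Hom A (X ⊗ Y)) : Hom A X :=
  eqm (ob_runit X) ∘ ((idm X ⊗m del Y) ∘ f).
Definition margR {A X Y : Ob D} (f : Hom A (X ⊗ Y)) : Hom A Y :=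
  eqm (ob_lunit Y) ∘ ((del X ⊗m idm Y) ∘ f).

Definition IsCondL {A X Y : Ob D} (f : Hom A (X ⊗ Y)) (c : Hom (X ⊗ A) Y) : Prop :=
  f = (idm X ⊗m c) ∘ eqm (ob_assoc X X A) ∘ (copy X ⊗m idm A)
      ∘ (margL f ⊗m idm A) ∘ copy A.

Definition IsCondR {A X Y : Ob D} (f : Hom A (X ⊗ Y)) (c : Hom (A ⊗ Y) X) : Prop :=
  f = (c ⊗m idm Y) ∘ eqm (eq_sym (ob_assoc A Y Y)) ∘ (idm A ⊗m copy Y)
      ∘ (idm A ⊗m margR f) ∘ copy A.

Definition HasConditionals : Prop :=
  forall (A X Y : Ob D) (f : Hom A (X ⊗ Y)),
    (exists c, IsCondL f c) /\ (exists c, IsCondR f c).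

Definition as_eq {X Y : Ob D} (mu : Hom I X) (f g : Hom X Y) : Prop :=
  pairm (idm X) f ∘ mu = pairm (idm X) g ∘ mu.

Definition abscont {X : Ob D} (mu nu : Hom I X) : Prop :=
  forall (Y : Ob D) (f g : Hom X Y), as_eq nu f g -> as_eq mu f g.

Definition stens {X Y : Ob D} (x : Hom I X) (y : Hom I Y) : Hom I (X ⊗ Y) :=
  (x ⊗m y) ∘ eqm (eq_sym (ob_lunit I)).

Definition PreciseSupports : Prop :=
  forall (X Y : Ob D) (x : Hom I X) (y : Hom I Y) (f : Hom X Y) (mu : Hom I X),
    deterministic x -> deterministic y ->
    (abscont (stens x y) (pairm (idm X) f ∘ mu) <-> (abscont x mu /\ abscont y (f ∘ x))).

Record ObsHom (X Y : Ob D) := {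
  okern : Ob D;
  omor : Hom X (Y ⊗ okern);
  ostate : Hom I okern
}.

Definition obs_valid {X Y : Ob D} (F : ObsHom X Y) : Prop := deterministic (ostate F).

Definition obs_id (X : Ob D) : ObsHom X X :=
  {| okern := I; omor := eqm (eq_sym (ob_runit X)); ostate := idm I |}.

Definition obs_comp {X Y Z : Ob D} (G : ObsHom Y Z) (F : ObsHom X Y) : ObsHom X Z :=
  {| okern := okern G ⊗ okern F;
     omor := eqm (ob_assoc Z (okern G) (okern F)) ∘ ((omor G ⊗m idm (okern F)) ∘ omor F);
     ostate := stens (ostate G) (ostate F) |}.

Definition obs_tens {X1 Y1 X2 Y2 : Ob D} (F1 : ObsHom X1 Y1) (F2 : ObsHom X2 Y2)
  : ObsHom (X1 ⊗ X2) (Y1 ⊗ Y2) :=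
  {| okern := okern F1 ⊗ okern F2;
     omor := msw Y1 (okern F1) Y2 (okern F2) ∘ (omor F1 ⊗m omor F2);
     ostate := stens (ostate F1) (ostate F2) |}.

Definition obs_J {X Y : Ob D} (f : Hom X Y) : ObsHom X Y :=
  {| okern := I; omor := eqm (eq_sym (ob_runit Y)) ∘ f; ostate := idm I |}.

Definition obs_castR {X Y Y' : Ob D} (e : Y = Y') (F : ObsHom X Y) : ObsHom X Y' :=
  match e in _ = Y'' return ObsHom X Y'' with eq_refl => F end.

Definition cond_eff {X : Ob D} (o : Hom I X) : ObsHom X I :=
  {| okern := X; omor := eqm (eq_sym (ob_lunit X)); ostate := o |}.

(* equivalence of states (K,psi,o), (K',psi',o') : I ~> X.
   psi|_K : K -> X is a conditional w.r.t. K (A = I, I ⊗ K = K). *)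
Definition state_sim {X : Ob D} (S S' : ObsHom I X) : Prop :=
  (abscont (ostate S) (margR (omor S)) /\ abscont (ostate S') (margR (omor S')) /\
   forall (c : Hom (okern S) X) (c' : Hom (okern S') X),
     IsCondR (omor S) (c ∘ eqm (ob_lunit (okern S))) ->
     IsCondR (omor S') (c' ∘ eqm (ob_lunit (okern S'))) ->
     c ∘ ostate S = c' ∘ ostate S')
  \/
  (~ abscont (ostate S) (margR (omor S)) /\ ~ abscont (ostate S') (margR (omor S'))).

Definition obs_equiv {X Y : Ob D} (F G : ObsHom X Y) : Prop :=
  forall (A : Ob D) (Psi : ObsHom I (A ⊗ X)), obs_valid Psi ->
    state_sim (obs_comp (obs_tens (obs_id A) F) Psi)
              (obs_comp (obs_tens (obs_id A) G) Psi).

End Markov.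

(* Main.v *)
Require Import Defs.
From Stdlib Require Import ProofIrrelevance Classical.

Section S.
Context {D : MkData} (MA : MarkovAxioms D).

Lemma cA {W X Y Z : Ob D} (h : Hom Y Z) (g : Hom X Y) (f : Hom W X) :
  h ∘ g ∘ f = h ∘ (g ∘ f).
Proof. symmetry; apply (comp_assoc MA). Qed.
Lemma cidl {X Y : Ob D} (f : Hom X Y) : idm Y ∘ f = f.
Proof. apply (comp_id_l MA). Qed.
Lemma cidr {X Y : Ob D} (f : Hom X Y) : f ∘ idm X = f.
Proof. apply (comp_id_r MA). Qed.
Lemma tid (X Y : Ob D) : idm X ⊗m idm Y = idm (X ⊗ Y).
Proof. apply (tens_id MA). Qed.
Lemma tcomp {X Y Z X' Y' Z' : Ob D} (f : Hom X Y) (g : Hom Y Z) (f' : Hom X' Y') (g' : Hom Y' Z') :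
  (g ∘ f) ⊗m (g' ∘ f') = (g ⊗m g') ∘ (f ⊗m f').
Proof. apply (tens_comp MA). Qed.

Lemma eqm_loop {X : Ob D} (e : X = X) : eqm e = idm X.
Proof. rewrite (proof_irrelevance _ e eq_refl). reflexivity. Qed.
Lemma eqm_irr {X Y : Ob D} (e1 e2 : X = Y) : eqm e1 = eqm e2.
Proof. rewrite (proof_irrelevance _ e1 e2). reflexivity. Qed.
Lemma eqm_comp {X Y Z : Ob D} (e1 : X = Y) (e2 : Y = Z) : eqm e2 ∘ eqm e1 = eqm (eq_trans e1 e2).
Proof. destruct e2, e1. simpl. apply cidl. Qed.
Lemma eqm_comp_r {W X Y Z : Ob D} (e1 : X = Y) (e2 : Y = Z) (f : Hom W X) :
  eqm e2 ∘ (eqm e1 ∘ f) = eqm (eq_trans e1 e2) ∘ f.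
Proof. rewrite <- eqm_comp. symmetry; apply cA. Qed.
Lemma eqm_tens {X Y X' Y' : Ob D} (e1 : X = X') (e2 : Y = Y') :
  eqm e1 ⊗m eqm e2 = eqm (f_equal2 tens e1 e2).
Proof. destruct e1, e2. rewrite !eqm_loop; exact (tid _ _). Qed.
Lemma eqm_tens_il {X Y Y' : Ob D} (e2 : Y = Y') :
  idm X ⊗m eqm e2 = eqm (f_equal (tens X) e2).
Proof. destruct e2. rewrite !eqm_loop; exact (tid _ _). Qed.
Lemma eqm_tens_ir {X X' Y : Ob D} (e1 : X = X') :
  eqm e1 ⊗m idm Y = eqm (f_equal (fun Z => tens Z Y) e1).
Proof. destruct e1. rewrite !eqm_loop; exact (tid _ _). Qed.
Lemma eqm_inv {X Y : Ob D} (e : X = Y) : eqm (eq_sym e) ∘ eqm e = idm X.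
Proof. rewrite eqm_comp. apply eqm_loop. Qed.
Lemma eqm_inv_r {W X Y : Ob D} (e : X = Y) (f : Hom W X) : eqm (eq_sym e) ∘ (eqm e ∘ f) = f.
Proof. rewrite eqm_comp_r, eqm_loop. apply cidl. Qed.

Lemma tl {X Y : Ob D} (f : Hom X Y) :
  idm I ⊗m f = eqm (eq_sym (ob_lunit Y)) ∘ (f ∘ eqm (ob_lunit X)).
Proof. rewrite <- (tens_lunit MA). symmetry. apply eqm_inv_r. Qed.
Lemma tr {X Y : Ob D} (f : Hom X Y) :
  f ⊗m idm I = eqm (eq_sym (ob_runit Y)) ∘ (f ∘ eqm (ob_runit X)).
Proof. rewrite <- (tens_runit MA). symmetry. apply eqm_inv_r. Qed.

Lemma tsplit {X Y X' Y' : Ob D} (f : Hom X Y) (g : Hom X' Y') :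
  f ⊗m g = (f ⊗m idm Y') ∘ (idm X ⊗m g).
Proof. rewrite <- tcomp, cidl, cidr. reflexivity. Qed.
Lemma tsplit' {X Y X' Y' : Ob D} (f : Hom X Y) (g : Hom X' Y') :
  f ⊗m g = (idm Y ⊗m g) ∘ (f ⊗m idm X').
Proof. rewrite <- tcomp, cidl, cidr. reflexivity. Qed.


Lemma tail_intro {X Y : Ob D} (f g : Hom X Y) : f ∘ idm X = g ∘ idm X -> f = g.
Proof. rewrite !cidr. auto. Qed.
Ltac normt := repeat progress (rewrite ?cA, ?eqm_comp_r, ?eqm_comp, ?eqm_loop, ?cidl, ?tid, ?eqm_tens, ?eqm_tens_il, ?eqm_tens_ir).
Ltac norm := repeat progress (rewrite ?cA, ?eqm_comp_r, ?eqm_comp, ?eqm_loop, ?cidl, ?cidr, ?tid, ?eqm_tens, ?eqm_tens_il, ?eqm_tens_ir).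

Lemma tassoc {X Y Z X' Y' Z' : Ob D} (f : Hom X X') (g : Hom Y Y') (h : Hom Z Z') :
  f ⊗m (g ⊗m h) = eqm (ob_assoc X' Y' Z') ∘ ((f ⊗m g) ⊗m h) ∘ eqm (eq_sym (ob_assoc X Y Z)).
Proof. rewrite (tens_assoc MA). rewrite cA, eqm_comp, eqm_loop, cidr. reflexivity. Qed.
Lemma tassoc' {X Y Z X' Y' Z' : Ob D} (f : Hom X X') (g : Hom Y Y') (h : Hom Z Z') :
  (f ⊗m g) ⊗m h = eqm (eq_sym (ob_assoc X' Y' Z')) ∘ (f ⊗m (g ⊗m h)) ∘ eqm (ob_assoc X Y Z).
Proof. rewrite cA, <- (tens_assoc MA), eqm_inv_r. reflexivity. Qed.

Lemma ta1_r {W X Y Z X' Y' Z' : Ob D} (f : Hom X X') (g : Hom Y Y') (h : Hom Z Z') (k : Hom W _) :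
  eqm (ob_assoc X' Y' Z') ∘ (((f ⊗m g) ⊗m h) ∘ k) = (f ⊗m (g ⊗m h)) ∘ (eqm (ob_assoc X Y Z) ∘ k).
Proof. rewrite <- !cA, (tens_assoc MA). reflexivity. Qed.
Lemma ta2_r {W X Y Z X' Y' Z' : Ob D} (f : Hom X X') (g : Hom Y Y') (h : Hom Z Z') (k : Hom W _) :
  eqm (eq_sym (ob_assoc X' Y' Z')) ∘ ((f ⊗m (g ⊗m h)) ∘ k) = ((f ⊗m g) ⊗m h) ∘ (eqm (eq_sym (ob_assoc X Y Z)) ∘ k).
Proof. rewrite tassoc. norm. reflexivity. Qed.
Lemma tc_r {W X Y Z X' Y' Z' : Ob D} (f : Hom X Y) (g : Hom Y Z) (f' : Hom X' Y') (g' : Hom Y' Z') (k : Hom W _) :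
  (g ⊗m g') ∘ ((f ⊗m f') ∘ k) = ((g ∘ f) ⊗m (g' ∘ f')) ∘ k.
Proof. rewrite <- cA, tcomp. reflexivity. Qed.

Lemma tcl {X Y Z X' Y' : Ob D} (g : Hom X Y) (f : Hom Y Z) (h : Hom X' Y') :
  (f ∘ g) ⊗m h = (f ⊗m h) ∘ (g ⊗m idm X').
Proof. rewrite <- tcomp, cidr. reflexivity. Qed.
Lemma tcr {X Y Z X' Y' : Ob D} (g : Hom X Y) (f : Hom Y Z) (h : Hom X' Y') :
  h ⊗m (f ∘ g) = (h ⊗m f) ∘ (idm X' ⊗m g).
Proof. rewrite <- tcomp, cidr. reflexivity. Qed.
Lemma msw_inner {B C E B' C' E' : Ob D} (b : Hom B B') (c : Hom C C') (e : Hom E E') :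
  (eqm (ob_assoc C' B' E') ∘ ((swap B' C' ⊗m idm E') ∘ eqm (eq_sym (ob_assoc B' C' E')))) ∘ (b ⊗m (c ⊗m e))
  = (c ⊗m (b ⊗m e)) ∘ (eqm (ob_assoc C B E) ∘ ((swap B C ⊗m idm E) ∘ eqm (eq_sym (ob_assoc B C E)))).
Proof.
  apply tail_intro. normt.
  rewrite ta2_r, tc_r, (swap_nat MA), cidl.
  rewrite tcl. normt. rewrite ta1_r. reflexivity.
Qed.

Lemma msw_nat {A B C E A' B' C' E' : Ob D} (a : Hom A A') (b : Hom B B') (c : Hom C C') (e : Hom E E') :
  msw A' B' C' E' ∘ ((a ⊗m b) ⊗m (c ⊗m e)) = ((a ⊗m c) ⊗m (b ⊗m e)) ∘ msw A B C E.
Proof.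
  unfold msw. apply tail_intro. rewrite !cA.
  rewrite ta1_r, tc_r, msw_inner, cidl, tcr.
  normt. rewrite ta2_r. reflexivity.
Qed.
Lemma det_id (X : Ob D) : deterministic (idm X).
Proof. unfold deterministic. rewrite cidr, tid, cidl. reflexivity. Qed.
Lemma det_eqm {X Y : Ob D} (e : X = Y) : deterministic (eqm e).
Proof. destruct e. apply det_id. Qed.
Lemma det_comp {X Y Z : Ob D} (f : Hom X Y) (g : Hom Y Z) :
  deterministic f -> deterministic g -> deterministic (g ∘ f).
Proof.
  unfold deterministic. intros Hf Hg.
  rewrite <- cA, Hg, cA, Hf, <- cA, tcomp. reflexivity.
Qed.
Lemma det_tens {X Y X' Y' : Ob D} (f : Hom X Y) (g : Hom X' Y') :
  deterministic f -> deterministic g -> deterministic (f ⊗m g).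
Proof.
  unfold deterministic. intros Hf Hg.
  rewrite !(copy_tens MA), cA, <- tcomp, Hf, Hg, tcomp, <- cA, msw_nat. apply cA.
Qed.

Lemma coassoc_r {W X : Ob D} (k : Hom W X) :
  (copy X ⊗m idm X) ∘ (copy X ∘ k) = eqm (eq_sym (ob_assoc X X X)) ∘ ((idm X ⊗m copy X) ∘ (copy X ∘ k)).
Proof. rewrite <- (cA (idm X ⊗m copy X) (copy X) k), <- (copy_coassoc MA). normt. reflexivity. Qed.

Lemma cc (X : Ob D) :
  (copy X ⊗m copy X) ∘ copy X =
  eqm (eq_sym (ob_assoc X X (X ⊗ X))) ∘ ((idm X ⊗m ((idm X ⊗m copy X) ∘ copy X)) ∘ copy X).
Proof.
  apply tail_intro. rewrite tsplit'. normt. rewrite coassoc_r.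
  rewrite tcr. normt. rewrite ta2_r, tid. reflexivity.
Qed.
Lemma MU (X : Ob D) :
  eqm (ob_assoc X X X) ∘ ((swap X X ⊗m idm X) ∘ (eqm (eq_sym (ob_assoc X X X)) ∘ ((idm X ⊗m copy X) ∘ copy X)))
  = (idm X ⊗m copy X) ∘ copy X.
Proof.
  rewrite <- (copy_coassoc MA). normt.
  rewrite tc_r, (copy_comm MA), cidl. reflexivity.
Qed.
Lemma det_copy (X : Ob D) : deterministic (copy X).
Proof.
  unfold deterministic. rewrite (copy_tens MA), cA, cc. unfold msw. normt.
  rewrite tc_r, cidl. normt. rewrite MU. reflexivity.
Qed.
Lemma det_r {X Y W : Ob D} (g : Hom X Y) (k : Hom W X) : deterministic g ->
  copy Y ∘ (g ∘ k) = (g ⊗m g) ∘ (copy X ∘ k).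
Proof. unfold deterministic. intro H. rewrite <- !cA, H. reflexivity. Qed.

Lemma margR_g {Y K K' : Ob D} (g : Hom K' K) (psi : Hom I (Y ⊗ K')) :
  margR ((idm Y ⊗m g) ∘ psi) = g ∘ margR psi.
Proof.
  unfold margR. rewrite <- (cA (del Y ⊗m idm K)), <- tcomp, cidl, cidr.
  rewrite tsplit'. rewrite tl. normt. reflexivity.
Qed.

Lemma isc_eq {Y K : Ob D} (c : Hom K Y) (m : Hom I K) :
  (c ∘ eqm (ob_lunit K)) ⊗m idm K ∘ eqm (eq_sym (ob_assoc I K K)) ∘ (idm I ⊗m copy K)
      ∘ (idm I ⊗m m) ∘ copy I = (c ⊗m idm K) ∘ (copy K ∘ m).
Proof.
  rewrite tcl, !tl, (copy_unit MA). norm. reflexivity.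
Qed.

Lemma ISC {Y K : Ob D} (psi : Hom I (Y ⊗ K)) (c : Hom K Y) :
  IsCondR psi (c ∘ eqm (ob_lunit K)) <-> psi = (c ⊗m idm K) ∘ (copy K ∘ margR psi).
Proof. unfold IsCondR. rewrite isc_eq. tauto. Qed.

Lemma pair_g {K K' Z W : Ob D} (g : Hom K' K) (f : Hom K Z) (m : Hom W K') : deterministic g ->
  pairm (idm K) f ∘ (g ∘ m) = (g ⊗m idm Z) ∘ (pairm (idm K') (f ∘ g) ∘ m).
Proof.
  intro Hg. unfold pairm. normt. rewrite det_r by exact Hg. rewrite !tc_r. normt.
  rewrite cidr. reflexivity.
Qed.

Lemma cancel_hg {K K' Z W : Ob D} (g : Hom K' K) (h : Hom K K') (k : Hom W (K' ⊗ Z)) :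
  h ∘ g = idm K' -> (h ⊗m idm Z) ∘ ((g ⊗m idm Z) ∘ k) = k.
Proof. intro H. rewrite tc_r, H, cidl, tid, cidl. reflexivity. Qed.

Lemma AC {K K' : Ob D} (g : Hom K' K) (h : Hom K K') (x mu : Hom I K') :
  deterministic g -> h ∘ g = idm K' ->
  (abscont (g ∘ x) (g ∘ mu) <-> abscont x mu).
Proof.
  intros Hg Hhg. unfold abscont, as_eq. split.
  - intros H Z f1 f2 E.
    assert (E2 : pairm (idm K) (f1 ∘ h) ∘ (g ∘ mu) = pairm (idm K) (f2 ∘ h) ∘ (g ∘ mu)).
    { rewrite !pair_g by exact Hg. rewrite !cA, Hhg, !cidr. rewrite E. reflexivity. }
    specialize (H Z _ _ E2). rewrite !pair_g in H by exact Hg.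
    rewrite !cA, Hhg, !cidr in H.
    apply (f_equal (fun t => (h ⊗m idm Z) ∘ t)) in H.
    rewrite !cancel_hg in H by exact Hhg. exact H.
  - intros H Z f1 f2 E.
    rewrite !pair_g in E by exact Hg.
    apply (f_equal (fun t => (h ⊗m idm Z) ∘ t)) in E.
    rewrite !cancel_hg in E by exact Hhg.
    specialize (H Z _ _ E). rewrite !pair_g by exact Hg. rewrite H. reflexivity.
Qed.
Lemma pair_swap {Y K : Ob D} (c : Hom K Y) (m : Hom I K) :
  pairm (idm K) c ∘ m = swap Y K ∘ ((c ⊗m idm K) ∘ (copy K ∘ m)).
Proof.
  unfold pairm. rewrite cA, <- (cA (swap Y K) (c ⊗m idm K)), (swap_nat MA), cA.
  rewrite <- (cA (swap K K) (copy K) m), (copy_comm MA). reflexivity.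
Qed.

Lemma marg_pair {Y K : Ob D} (c : Hom K Y) (x : Hom I K) :
  c ∘ x = eqm (ob_lunit Y) ∘ ((del K ⊗m idm Y) ∘ (pairm (idm K) c ∘ x)).
Proof.
  unfold pairm. normt. rewrite tc_r, cidl, cidr.
  rewrite tsplit', tl. normt.
  rewrite <- (cA (del K ⊗m idm K) (copy K) x), <- (cA (eqm (ob_lunit K))), <- (cA (eqm (ob_lunit K)) (del K ⊗m idm K)).
  rewrite (copy_counit_l MA), cidl. reflexivity.
Qed.

Lemma UQ {Y K : Ob D} (psi : Hom I (Y ⊗ K)) (c1 c2 : Hom K Y) (x : Hom I K) :
  IsCondR psi (c1 ∘ eqm (ob_lunit K)) -> IsCondR psi (c2 ∘ eqm (ob_lunit K)) ->
  abscont x (margR psi) -> c1 ∘ x = c2 ∘ x.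
Proof.
  rewrite !ISC. intros H1 H2 Hx.
  assert (E : as_eq (margR psi) c1 c2).
  { unfold as_eq. rewrite !pair_swap. rewrite <- H1, <- H2. reflexivity. }
  specialize (Hx _ _ _ E). unfold as_eq in Hx.
  rewrite (marg_pair c1), (marg_pair c2), Hx. reflexivity.
Qed.

Lemma CT {Y K K' : Ob D} (psi : Hom I (Y ⊗ K')) (g : Hom K' K) (h : Hom K K') (c : Hom K' Y) :
  deterministic g -> h ∘ g = idm K' ->
  IsCondR psi (c ∘ eqm (ob_lunit K')) ->
  IsCondR ((idm Y ⊗m g) ∘ psi) ((c ∘ h) ∘ eqm (ob_lunit K)).
Proof.
  intros Hg Hhg. rewrite !ISC, margR_g. intro H.
  rewrite det_r by exact Hg. rewrite tc_r, cA, Hhg, cidr, cidl.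
  rewrite H at 1. rewrite tc_r, cidl, cidr. reflexivity.
Qed.

Lemma KEY {Y K K' : Ob D} (psi : Hom I (Y ⊗ K')) (s : Hom I K') (g : Hom K' K) (h : Hom K K') :
  deterministic g -> h ∘ g = idm K' ->
  state_sim ({| okern := K; omor := (idm Y ⊗m g) ∘ psi; ostate := g ∘ s |} : ObsHom I Y)
            ({| okern := K'; omor := psi; ostate := s |} : ObsHom I Y).
Proof.
  intros Hg Hhg. unfold state_sim; simpl. rewrite margR_g, (AC g h s (margR psi) Hg Hhg).
  destruct (classic (abscont s (margR psi))) as [Ha | Ha].
  - left. split; [exact Ha | split; [exact Ha |]].
    intros c c' Hc Hc'.
    transitivity ((c' ∘ h) ∘ (g ∘ s)).
    2:{ rewrite cA, <- (cA h g s), Hhg, cidl. reflexivity. }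
    apply (UQ ((idm Y ⊗m g) ∘ psi)); [exact Hc | apply CT; assumption |].
    rewrite margR_g, (AC g h s (margR psi) Hg Hhg). exact Ha.
  - right. tauto.
Qed.
Lemma KEY' {Y : Ob D} (S S' : ObsHom I Y) (g : Hom (okern S') (okern S)) (h : Hom (okern S) (okern S')) :
  deterministic g -> h ∘ g = idm _ ->
  omor S = (idm Y ⊗m g) ∘ omor S' -> ostate S = g ∘ ostate S' -> state_sim S S'.
Proof.
  destruct S as [K m s], S' as [K' m' s']; simpl in *. intros Hg Hhg Hm Hs. subst m s.
  apply KEY with (h := h); assumption.
Qed.

Lemma castR_eq {X Y Y' : Ob D} (e : Y = Y') (F : ObsHom X Y) :
  obs_castR e F = {| okern := okern F; omor := eqm (f_equal (fun Z => Z ⊗ okern F) e) ∘ omor F;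
                     ostate := ostate F |}.
Proof. destruct e, F. cbn. try rewrite eqm_loop. rewrite cidl. reflexivity. Qed.

Definition T1r {X : Ob D} (o : Hom I X) : ObsHom (X ⊗ X) X :=
  {| okern := okern (obs_tens (cond_eff o) (obs_id X));
     omor := eqm (f_equal (fun Z => Z ⊗ okern (obs_tens (cond_eff o) (obs_id X))) (ob_lunit X))
             ∘ omor (obs_tens (cond_eff o) (obs_id X));
     ostate := ostate (obs_tens (cond_eff o) (obs_id X)) |}.

Lemma omorF {X : Ob D} (o : Hom I X) :
  exists e, omor (obs_comp (obs_comp (cond_eff o) (T1r o)) (obs_J (copy X))) = eqm e ∘ copy X.
Proof.
  unfold T1r. cbn [omor okern obs_comp obs_tens obs_id cond_eff obs_J].
  unfold msw. rewrite !tl, !tr. normt. rewrite (copy_comm MA). eexists. reflexivity.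
Qed.
Lemma genS {A X : Ob D} (Psi : ObsHom I (A ⊗ X)) (F : ObsHom X I) (W : Ob D)
  (e : W = I ⊗ okern F) (q : Hom X W) :
  omor F = eqm e ∘ q ->
  exists E, omor (obs_comp (obs_tens (obs_id A) F) Psi)
            = eqm E ∘ (((idm A ⊗m q) ⊗m idm (okern Psi)) ∘ omor Psi).
Proof.
  intro H. cbn [omor okern obs_comp obs_tens obs_id]. rewrite H.
  rewrite (tcr q (eqm e) (eqm (eq_sym (ob_runit A)))).
  unfold msw. rewrite (swap_unit MA). normt. rewrite tcl. normt. eexists. reflexivity.
Qed.

Lemma stens_idl {Z : Ob D} (z : Hom I Z) : stens (idm I) z = eqm (eq_sym (ob_lunit Z)) ∘ z.
Proof. unfold stens. rewrite tl. norm. reflexivity. Qed.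
Lemma stens_idr {Z : Ob D} (z : Hom I Z) : stens z (idm I) = eqm (eq_sym (ob_runit Z)) ∘ z.
Proof. unfold stens. rewrite tr. norm. reflexivity. Qed.
Lemma tcr2 {X Y Z X' Y' : Ob D} (g : Hom X Y) (f : Hom Y Z) (h : Hom X' Y') :
  h ⊗m (f ∘ g) = (idm Y' ⊗m f) ∘ (h ⊗m g).
Proof. rewrite <- tcomp, cidl. reflexivity. Qed.

Lemma counit' (X : Ob D) : (del X ⊗m idm X) ∘ copy X = eqm (eq_sym (ob_lunit X)).
Proof.
  rewrite <- (cidl (_ ∘ copy X)), <- (eqm_inv (ob_lunit X)), cA, <- (cA (eqm (ob_lunit X))), (copy_counit_l MA).
  apply cidr.
Qed.

Lemma stens_g {X Y Z : Ob D} (G : Hom X Y) (x : Hom I X) (p : Hom I Z) :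
  (G ⊗m idm Z) ∘ stens x p = stens (G ∘ x) p.
Proof. unfold stens. rewrite <- cA, <- tcomp, cidl. reflexivity. Qed.

Lemma main_sec (X : Ob D) (o : Hom I X) : deterministic o ->
    obs_equiv
      (obs_comp
         (obs_comp (cond_eff o)
                   (obs_castR (ob_lunit X) (obs_tens (cond_eff o) (obs_id X))))
         (obs_J (copy X)))
      (cond_eff o).
Proof.
  intro Ho. rewrite (castR_eq (ob_lunit X) (obs_tens (cond_eff o) (obs_id X))).
  fold (T1r o).
  unfold obs_equiv. intros A Psi HPsi.
  destruct (omorF o) as [a Ha].
  set (F := obs_comp (obs_comp (cond_eff o) (T1r o)) (obs_J (copy X))) in *.
  destruct (genS Psi F _ a (copy X) Ha) as [E1 HE1].
  assert (Hc : omor (cond_eff o) = eqm (eq_sym (ob_lunit X)) ∘ idm X) by (rewrite cidr; reflexivity).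
  destruct (genS Psi (cond_eff o) _ _ (idm X) Hc) as [E2 HE2].
  pose (G := eqm a ∘ (copy X ∘ eqm (ob_lunit X))).
  pose (H := eqm (eq_sym (ob_lunit X)) ∘ (eqm (ob_lunit X) ∘ ((del X ⊗m idm X) ∘ eqm (eq_sym a)))).
  apply (KEY' (obs_comp (obs_tens (obs_id A) F) Psi) (obs_comp (obs_tens (obs_id A) (cond_eff o)) Psi) (G ⊗m idm (okern Psi)) (H ⊗m idm (okern Psi))).
  - apply det_tens; [|apply det_id]. unfold G.
    apply det_comp; [apply det_comp; [apply det_eqm | apply det_copy] | apply det_eqm].
  - cbn [okern obs_comp obs_tens obs_id cond_eff]. rewrite <- tcomp, cidl, <- tid. f_equal. unfold G, H. normt.
    rewrite <- (cA (del X ⊗m idm X) (copy X)), counit'. norm. reflexivity.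
  - rewrite HE1, HE2. rewrite !tid, cidl.
    rewrite (eqm_irr E2 (eq_trans (f_equal (fun Z => Z ⊗ okern Psi) (f_equal2 tens (eq_sym (ob_runit A)) (eq_sym (ob_lunit X)))) (ob_assoc (A ⊗ I) (I ⊗ X) (okern Psi)))).
    rewrite <- eqm_comp_r, <- eqm_tens_ir, <- eqm_tens.
    rewrite <- (ta1_r (idm (A ⊗ I)) G (idm (okern Psi))).
    rewrite tc_r, <- tcomp, !cidl. unfold G. normt.
    rewrite cidr, (tcr (copy X) (eqm a) (eqm (eq_sym (ob_runit A)))), tcl. normt. erewrite (eqm_irr E1). reflexivity.
  - cbn [ostate okern obs_comp obs_tens obs_id cond_eff F]. unfold T1r.
    cbn [ostate okern obs_comp obs_tens obs_id cond_eff obs_J].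
    rewrite stens_g. f_equal.
    rewrite !stens_idl, !stens_idr. unfold G, stens. rewrite tcr2. normt.
    unfold deterministic in Ho. rewrite Ho, (copy_unit MA). erewrite (eqm_irr a). reflexivity.
Qed.
End S.

Theorem mainTheorem8 :
  forall (C : MarkovCat), @HasConditionals C -> @PreciseSupports C ->
  forall (X : Ob C) (o : Hom (@unitO C) X), deterministic o ->
    obs_equiv
      (obs_comp
         (obs_comp (cond_eff o)
                   (obs_castR (ob_lunit X) (obs_tens (cond_eff o) (obs_id X))))
         (obs_J (copy X)))
      (cond_eff o).
Proof.
  intros C _ _ X o Ho. exact (main_sec (maxioms C) X o Ho).
Qed.
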